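(* In a positive, anchored hidden Markov model, under any (measurable) policy $g$, the restricted information chain $F|_R$ has at least one state of the form $\delta(x_i)$ (with $(x_i,y_i)$ an anchor pair for some observation process $i$) which is positive recurrent, i.e. whose expected return time is finite.
   Context: Model: $(X_t)$ is a time-homogeneous Markov chain on $S=\{1,\dots,n\}$ with transition matrix $T$; $O$ is a finite index set of observation processes with values in $V=\{1,\dots,m\}$ and observation matrices $M^{(i)}$, $M^{(i)}_{jk}=\mathbb P(Y^{(i)}_t=k\mid X_t=j)$. $\mathcal P(S)$ is the probability simplex in $\mathbb R^n$, $\delta(x)$ the point mass at $x$. A policy is a function $g:\mathcal P(S)\to O$, $A_i=g^{-1}\{i\}$. For $i\in O$, $y\in V$: $\alpha_{i,y}(z)=(zTM^{(i)})_y=\sum_{j,x}z_jT_{j,x}M^{(i)}_{x,y}$ and, when $\alpha_{i,y}(z)>0$, $r_{i,y}(z)=\frac{\sum_{x,j}M^{(i)}_{x,y}T_{j,x}z_j\delta(x)}{\sum_{x,j}M^{(i)}_{x,y}T_{j,x}z_j}$. Positive: all entries of $T$ strictly positive. Anchored: $(X_t)$ ergodic and for each $i\in O$ there is an anchor pair $(x_i,y_i)$ with $M^{(i)}_{x_i,y_i}>0$ and $M^{(i)}_{x,y_i}=0$ for $x\ne x_i$. Orbit $R_x$: $\delta(x)$ together with all points $r_{i_k,y_k}\circ\cdots\circ r_{i_1,y_1}(\delta(x))$ ($k\ge1$, arbitrary $i_j\in O,y_j\in V$) with each $\alpha_{i_{j+1},y_{j+1}}$ positive at the preceding point; $R=\bigcup_xR_x$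 (countable). The restricted information chain $F|_R$ is the Markov chain on $R$ that from $z$ moves to $r_{g(z),y}(z)$ with probability $\alpha_{g(z),y}(z)$, $y\in V$ (this is the information state chain, i.e. the posterior of the hidden state, restricted to $R$). *)

(* Defs.v *)
From HB Require Import structures.
From mathcomp Require Import all_boot all_order all_algebra.
From mathcomp Require Import all_classical all_reals all_analysis.
Set Implicit Arguments. Unset Strict Implicit. Unset Printing Implicit Defensive.
Import Order.TTheory GRing.Theory Num.Theory.
Local Open Scope ring_scope.

Section HMM.
Variables (R : realType) (n m : nat) (O : finType).
Variables (T : 'M[R]_n) (M : O -> 'M[R]_(n, m)).

Definition stochastic p q (A : 'M[R]_(p, q)) : Prop :=
  (forall i j, 0 <= A i j) /\ (forall i, \sum_j A i j = 1).

Definition delta (x : 'I_n) : 'rV[R]_n := \row_j (j == x)%:R.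

Definition alpha (i : O) (y : 'I_m) (z : 'rV[R]_n) : R := (z *m T *m M i) 0 y.

(* r_{i,y}(z) : Bayesian update; only used where alpha_{i,y}(z) > 0 *)
Definition rupd (i : O) (y : 'I_m) (z : 'rV[R]_n) : 'rV[R]_n :=
  (alpha i y z)^-1 *: \row_x (M i x y * (z *m T) 0 x).

Definition positive_hmm : Prop := forall j k, 0 < T j k.

Definition irreducible_chain : Prop :=
  forall j k, exists t : nat, (0 < t)%N /\ 0 < (T ^+ t) j k.

Definition aperiodic_chain : Prop :=
  forall j d : nat, forall (Hj : (j < n)%N),
    (forall t, (0 < t)%N -> 0 < (T ^+ t) (Ordinal Hj) (Ordinal Hj) -> (d %| t)%N) ->
    d = 1%N.

Definition ergodic_chain : Prop := irreducible_chain /\ aperiodic_chain.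

Definition anchor_pair (i : O) (x : 'I_n) (y : 'I_m) : Prop :=
  0 < M i x y /\ (forall x', x' != x -> M i x' y = 0).

Definition anchored_hmm : Prop :=
  ergodic_chain /\ forall i, exists x y, anchor_pair i x y.

Inductive orbit (x : 'I_n) : 'rV[R]_n -> Prop :=
| orbit_base : orbit x (delta x)
| orbit_step z i y : orbit x z -> 0 < alpha i y z -> orbit x (rupd i y z).

Definition inR (z : 'rV[R]_n) : Prop := exists x, orbit x z.

Variable g : 'rV[R]_n -> O.

(* Information chain F|_R: from w, move to rupd (g w) y w w.p. alpha (g w) y w.
   avoid z k w = P_w(Z_1 <> z, ..., Z_k <> z). *)
Fixpoint avoid (z : 'rV[R]_n) (k : nat) (w : 'rV[R]_n) : R :=
  match k with
  | 0 => 1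
  | k'.+1 => \sum_(y : 'I_m)
      alpha (g w) y w *
      (if rupd (g w) y w == z then 0 else avoid z k' (rupd (g w) y w))
  end.

(* expected return time E_z[tau_z] = sum_{k>=0} P_z(tau_z > k), in \bar R *)
Definition expected_return_time (z : 'rV[R]_n) : \bar R :=
  (\sum_(k <oo) (avoid z k z)%:E)%E.

Definition positive_recurrent (z : 'rV[R]_n) : Prop :=
  (expected_return_time z < +oo)%E.

End HMM.

(* Main.v *)
Require Import Defs.
From HB Require Import structures.
From mathcomp Require Import all_boot all_order all_algebra.
From mathcomp Require Import all_classical all_reals all_analysis.
Import Order.TTheory GRing.Theory Num.Theory.
Set Implicit Arguments. Unset Strict Implicit. Unset Printing Implicit Defensive.
Local Open Scope ring_scope.

Section Aux.
Variables (R : realType) (n m : nat) (O : finType).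
Variables (T : 'M[R]_n) (M : O -> 'M[R]_(n, m)) (g : 'rV[R]_n -> O).
Hypothesis sT : stochastic T.
Hypothesis sM : forall i, stochastic (M i).

Definition nonneg (w : 'rV[R]_n) := forall j, 0 <= w 0 j.
Definition subp (w : 'rV[R]_n) := nonneg w /\ \sum_j w 0 j <= 1.
Definition prob (w : 'rV[R]_n) := nonneg w /\ \sum_j w 0 j = 1.

Lemma wT_ge0 w x : nonneg w -> 0 <= (w *m T) 0 x.
Proof.
move=> hw; rewrite mxE; apply: sumr_ge0 => k _; apply: mulr_ge0 => //.
by case: sT.
Qed.

Lemma alphaE i y w : alpha T M i y w = \sum_x M i x y * (w *m T) 0 x.
Proof. by rewrite /alpha mxE; apply: eq_bigr => x _; rewrite mulrC. Qed.

Lemma alpha_ge0 i y w : nonneg w -> 0 <= alpha T M i y w.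
Proof.
move=> hw; rewrite alphaE; apply: sumr_ge0 => x _; apply: mulr_ge0.
  by case: (sM i).
exact: wT_ge0.
Qed.

Lemma sum_alpha i w : \sum_y alpha T M i y w = \sum_j w 0 j.
Proof.
rewrite /alpha.
under eq_bigr do rewrite mxE.
rewrite exchange_big /=.
under eq_bigr do rewrite -mulr_sumr (proj2 (sM i)) mulr1 mxE.
rewrite exchange_big /=; apply: eq_bigr => j _.
by rewrite -mulr_sumr (proj2 sT) mulr1.
Qed.

Lemma rupd_nonneg i y w : nonneg w -> nonneg (rupd T M i y w).
Proof.
move=> hw j; rewrite /rupd 2!mxE; apply: mulr_ge0.
  by rewrite invr_ge0 alpha_ge0.
by apply: mulr_ge0; [case: (sM i) | exact: wT_ge0].
Qed.

Lemma rupd_sum i y w :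
  \sum_j (rupd T M i y w) 0 j = if alpha T M i y w == 0 then 0 else 1.
Proof.
rewrite /rupd.
under eq_bigr do rewrite 2!mxE.
rewrite -mulr_sumr -alphaE.
by case: eqP => [->|/eqP h]; rewrite ?invr0 ?mul0r // mulVf.
Qed.

Lemma rupd_subp i y w : nonneg w -> subp (rupd T M i y w).
Proof.
move=> hw; split; first exact: rupd_nonneg.
by rewrite rupd_sum; case: eqP.
Qed.

Lemma rupd_prob i y w : nonneg w -> 0 < alpha T M i y w -> prob (rupd T M i y w).
Proof.
move=> hw ha; split; first exact: rupd_nonneg.
by rewrite rupd_sum gt_eqF.
Qed.

Lemma avoid_ge0 z k w : nonneg w -> 0 <= avoid T M g z k w.
Proof.
elim: k w => [|k IH] w hw /=; first by [].
apply: sumr_ge0 => y _; apply: mulr_ge0; first exact: alpha_ge0.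
by case: eqP => // _; apply: IH; apply: rupd_nonneg.
Qed.

Lemma avoid_le1 z k w : subp w -> avoid T M g z k w <= 1.
Proof.
elim: k w => [|k IH] w [hw hs] /=; first by [].
apply: le_trans hs; rewrite -(sum_alpha (g w)).
apply: ler_sum => y _; rewrite -[leRHS]mulr1; apply: ler_wpM2l.
  exact: alpha_ge0.
by case: eqP => // _; apply: IH; apply: rupd_subp.
Qed.

Lemma avoid_mono z k w : subp w -> avoid T M g z k.+1 w <= avoid T M g z k w.
Proof.
elim: k w => [|k IH] w hw; first exact: avoid_le1.
rewrite [avoid _ _ _ _ k.+2 _]/= [avoid _ _ _ _ k.+1 _]/=.
apply: ler_sum => y _; apply: ler_wpM2l; first exact: alpha_ge0 (proj1 hw).
by case: eqP => // _; apply: IH; apply: rupd_subp (proj1 hw).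
Qed.

Lemma avoid_monoN z k k' w : subp w -> (k <= k')%N ->
  avoid T M g z k' w <= avoid T M g z k w.
Proof.
move=> hw /subnK <-; elim: (k' - k)%N => [|d IH] //.
rewrite addSn; apply: le_trans IH; exact: avoid_mono.
Qed.


Inductive reach : 'rV[R]_n -> 'rV[R]_n -> Prop :=
| reach0 w : reach w w
| reachS w y z : 0 < alpha T M (g w) y w -> reach (rupd T M (g w) y w) z -> reach w z.

Lemma reach_trans u v w : reach u v -> reach v w -> reach u w.
Proof. by elim=> // u' y z ha _ IH /IH; apply: reachS. Qed.

Lemma reach_snoc u w y : reach u w -> 0 < alpha T M (g w) y w ->
  reach u (rupd T M (g w) y w).
Proof.
move=> h ha; apply: reach_trans h _; apply: reachS ha _; exact: reach0.
Qed.

Lemma reach_prob u w : prob u -> reach u w -> prob w.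
Proof.
move=> hu h; elim: h hu => // u' y z ha _ IH hu; apply: IH.
exact: rupd_prob (proj1 hu) ha.
Qed.

Lemma prob_subp w : prob w -> subp w.
Proof. by case=> h1 h2; split; rewrite ?h2. Qed.

Lemma submult (S : 'rV[R]_n -> Prop) z l B :
  (forall w y, S w -> 0 < alpha T M (g w) y w -> S (rupd T M (g w) y w)) ->
  (forall w, S w -> avoid T M g z l w <= B) ->
  forall k w, S w -> nonneg w ->
  avoid T M g z (k + l) w <= avoid T M g z k w * B.
Proof.
move=> Scl SB; elim=> [|k IH] w Sw hw; first by rewrite add0n mul1r; exact: SB.
rewrite addSn /= mulr_suml; apply: ler_sum => y _.
rewrite -mulrA; have a0 := @alpha_ge0 (g w) y w hw.
have [->|an0] := eqVneq (alpha T M (g w) y w) 0; first by rewrite !mul0r.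
have ap : 0 < alpha T M (g w) y w by rewrite lt_def an0.
apply: ler_wpM2l => //; case: eqP => _; first by rewrite mul0r.
apply: IH; [exact: Scl | exact: rupd_nonneg].
Qed.

Lemma step_lt1 z t w y : prob w -> 0 < alpha T M (g w) y w ->
  (if rupd T M (g w) y w == z then 0 else avoid T M g z t (rupd T M (g w) y w)) < 1 ->
  avoid T M g z t.+1 w < 1.
Proof.
move=> [hw hs] ha hlt /=.
rewrite -[X in _ < X]hs -(sum_alpha (g w)) (bigD1 y) //= [X in _ < X](bigD1 y) //=.
apply: ltr_leD.
  by rewrite -[X in _ < X]mulr1 ltr_pM2l.
apply: ler_sum => y' _; rewrite -[leRHS]mulr1; apply: ler_wpM2l.
  exact: alpha_ge0.
by case: eqP => // _; apply: avoid_le1; apply: rupd_subp.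
Qed.

Lemma reach_lt1 w z : prob w -> reach w z -> w != z ->
  exists t, avoid T M g z t w < 1.
Proof.
move=> hw h; elim: h hw => [w' _|w' y z' ha hr IH hw hne]; first by rewrite eqxx.
have hp := @rupd_prob _ _ w' (proj1 hw) ha.
have [e|ne] := eqVneq (rupd T M (g w') y w') z'.
  by exists 1%N; apply: (@step_lt1 z' 0 w' y hw ha); rewrite e eqxx.
have [t ht] := IH hp ne; exists t.+1; apply: (@step_lt1 z' t w' y hw ha).
by rewrite (negbTE ne).
Qed.


Lemma alpha_anchor j x y w : anchor_pair M j x y ->
  alpha T M j y w = M j x y * (w *m T) 0 x.
Proof.
move=> [hp h0]; rewrite alphaE (bigD1 x) //= big1 ?addr0 // => x' hx'.
by rewrite h0 ?mul0r.
Qed.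

Lemma anchor_jump j x y w c0 : 0 < c0 -> prob w -> anchor_pair M j x y ->
  (forall k, c0 <= T k x) ->
  c0 * M j x y <= alpha T M j y w /\ rupd T M j y w = delta R x.
Proof.
move=> c0p [hw hs] ha hc; have [hp h0] := ha.
have wTx : c0 <= (w *m T) 0 x.
  have -> : c0 = \sum_k w 0 k * c0 by rewrite -mulr_suml hs mul1r.
  rewrite mxE; apply: ler_sum => k _; apply: ler_wpM2l; [exact: hw | exact: hc].
split.
  rewrite (@alpha_anchor _ _ _ w ha) [leRHS]mulrC.
  by rewrite ler_pM2r.
apply/matrixP => i k; rewrite [i]ord1 /rupd /delta (@alpha_anchor _ _ _ w ha) !mxE.
rewrite mxE in wTx.
have [->|ne] := eqVneq k x.
  rewrite ?eqxx mulVf //; apply: mulf_neq0; first by rewrite gt_eqF.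
  by rewrite gt_eqF // (lt_le_trans c0p wTx).
by rewrite (h0 k ne) mul0r mulr0.
Qed.

Lemma lb_pos (I : finType) (f : I -> R) : (forall i, 0 <= f i) ->
  0 < (1 + \sum_i (f i)^-1)^-1 /\ (1 + \sum_i (f i)^-1)^-1 <= 1 /\
  forall i, 0 < f i -> (1 + \sum_i (f i)^-1)^-1 <= f i.
Proof.
move=> hf; have s0 : 0 <= \sum_i (f i)^-1 by apply: sumr_ge0 => i _; rewrite invr_ge0.
have p1 : 0 < 1 + \sum_i (f i)^-1 by rewrite ltr_pwDl.
split; first by rewrite invr_gt0.
split; first by rewrite invr_le1 // ?unitf_gt0 // lerDl.
move=> i hi.
have h1 : (f i)^-1 <= 1 + \sum_i (f i)^-1.
  rewrite (bigD1 i) //= addrCA lerDl addr_ge0 //.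
  by apply: sumr_ge0 => j _; rewrite invr_ge0.
by rewrite -[leRHS]invrK lef_pV2 // posrE // invr_gt0.
Qed.


End Aux.

Lemma series_geom (R : realType) (s : nat -> R) (L : nat) (rho : R) :
  (forall k, 0 <= s k) -> (forall k, s k <= 1) -> rho < 1 ->
  (forall K, s (K + L)%N <= s K * rho) ->
  (\sum_(k <oo) (s k)%:E < +oo)%E.
Proof.
move=> s0 s1 r1 sL.
pose S K := \sum_(0 <= k < K) s k.
have HS : forall K, S (K + L)%N <= L%:R + rho * S K.
  elim=> [|K IH].
    rewrite /S [X in _ * X]big_geq // mulr0 addr0 add0n.
    apply: le_trans (_ : \sum_(0 <= k < L) (1 : R) <= _).
      by apply: ler_sum => k _.
    by rewrite sumr_const_nat subn0.
  rewrite addSn /S big_nat_recr //= big_nat_recr //= mulrDr addrA.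
  apply: lerD => //; rewrite mulrC; exact: sL.
have HB : forall K, S K <= L%:R / (1 - rho).
  move=> K; rewrite ler_pdivlMr ?subr_gt0 //.
  have : S K <= S (K + L)%N.
    rewrite /S [leRHS](big_cat_nat (n := K)) ?leq_addr //= lerDl.
    by apply: sumr_ge0 => k _.
  move: (HS K) => h1 h2.
  rewrite mulrDr mulrN mulr1 lerBlDr; rewrite mulrC.
  apply: le_trans h2 _; apply: le_trans h1 _; rewrite addrC lerD2l.
  by [].
apply: (@le_lt_trans _ _ (L%:R / (1 - rho))%:E); last exact: ltry.
apply: lime_le.
  by apply: is_cvg_nneseries => k _ _; rewrite lee_fin.
apply: nearW => K; rewrite sumEFin lee_fin; exact: HB.
Qed.

From mathcomp Require Import lra.

Section Main.
Variables (R : realType) (n m : nat) (O : finType).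
Variables (T : 'M[R]_n) (M : O -> 'M[R]_(n, m)) (g : 'rV[R]_n -> O).
Hypothesis sT : stochastic T.
Hypothesis sM : forall i, stochastic (M i).
Hypothesis posT : positive_hmm T.
Hypothesis anc : forall i, exists x y, anchor_pair M i x y.

Lemma delta_prob (x : 'I_n) : prob (delta R x).
Proof.
split; first by move=> j; rewrite mxE ler0n.
by rewrite (bigD1 x) //= big1 ?addr0 => [|j hj]; rewrite mxE ?eqxx // (negbTE hj).
Qed.

Lemma main_aux : exists (i : O) (x : 'I_n) (y : 'I_m),
    anchor_pair M i x y /\ inR T M (delta R x) /\
    positive_recurrent T M g (delta R x).
Proof.
have anc' : forall i, exists p : 'I_n * 'I_m, anchor_pair M i p.1 p.2.
  by move=> i; have [x [y h]] := anc i; exists (x, y).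
have [ap hap] := choice anc'.
pose a j := delta R (ap j).1.
pose Sset i := [set j | `[< reach T M g (a i) (a j) >]].
pose i0 := g 0.
case: (arg_minnP (fun i => #|Sset i|) (erefl (xpredT i0))) => i _ imin.
have closed : forall j, reach T M g (a i) (a j) -> reach T M g (a j) (a i).
  move=> j hij; case: (pselect (reach T M g (a j) (a i))) => // nji; exfalso.
  have : Sset j \proper Sset i.
    apply/properP; split.
      apply/fintype.subsetP => k; rewrite !inE => h; apply/asboolP.
      have hh := reach_trans hij h. exact: (asboolT hh).
    exists i; rewrite !inE.
      exact: reach0.
    by apply/negP => /asboolP.
  move/proper_card; have := imin j isT; rewrite leqNgt => /negP; exact.
pose z := a i.
have probz : prob z by exact: delta_prob.
have aprob : forall j, prob (a j) by move=> j; exact: delta_prob.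
pose fT := fun p : 'I_n * 'I_n => T p.1 p.2.
have [c0p [_ c0le]] := lb_pos (fun p => ltW (posT p.1 p.2) : 0 <= fT p).
set c0 := (1 + _)^-1 in c0p c0le.
have hc0 : forall k x, c0 <= T k x by move=> k x; exact: (c0le (k, x) (posT k x)).
pose fM := fun j => M j (ap j).1 (ap j).2.
have [cMp [_ cMle]] := lb_pos (fun j => ltW (proj1 (hap j)) : 0 <= fM j).
set cM := (1 + _)^-1 in cMp cMle.
have hcM : forall j, cM <= M j (ap j).1 (ap j).2 by move=> j; exact: (cMle j (proj1 (hap j))).
pose cond j := (a j != z) && `[< reach T M g z (a j) >].
have ht : forall j, exists t, cond j -> avoid T M g z t (a j) < 1.
  move=> j; case: (boolP (cond j)) => [/andP [ne /asboolP r]|_]; last by exists 0%N.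
  have [t h] := reach_lt1 sT sM (aprob j) (closed j r) ne.
  by exists t.
have [tf htf] := choice ht.
pose N := (\max_(j : O) tf j)%N.
have hN : forall j, cond j -> avoid T M g z N (a j) < 1.
  move=> j cj; apply: le_lt_trans (htf j cj).
  apply: avoid_monoN sT sM _ _ _ _ (prob_subp (aprob j)) _.
  exact: leq_bigmax.
pose q j := 1 - avoid T M g z N (a j).
have q0 : forall j, 0 <= q j.
  by move=> j; rewrite /q subr_ge0; exact: (avoid_le1 g sT sM z N (prob_subp (aprob j))).
have [pp [p1 ple]] := lb_pos q0.
set p := (1 + _)^-1 in pp p1 ple.
pose rho := 1 - c0 * cM * p.
have bound : forall w, reach T M g z w -> avoid T M g z N.+1 w <= rho.
  move=> w rw.
  have hw := reach_prob sT sM probz rw.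
  have [hal hr] := anchor_jump c0p hw (hap (g w)) (fun k => hc0 k (ap (g w)).1).
  have alp : c0 * cM <= alpha T M (g w) (ap (g w)).2 w.
    apply: le_trans hal; apply: ler_wpM2l; [exact: ltW | exact: hcM].
  have al0 : 0 < alpha T M (g w) (ap (g w)).2 w.
    exact: lt_le_trans (mulr_gt0 c0p cMp) alp.
  have sum1 := sum_alpha sT sM (g w) w.
  rewrite (proj2 hw) (bigD1 (ap (g w)).2) //= in sum1.
  rewrite [avoid _ _ _ _ N.+1 _]/= (bigD1 (ap (g w)).2) //= hr.
  apply: (@le_trans _ _ (alpha T M (g w) (ap (g w)).2 w * (1 - p) +
      (1 - alpha T M (g w) (ap (g w)).2 w))).
    apply: lerD.
      case: ifP => [_|hne].
        by rewrite mulr0; apply: mulr_ge0; [exact: ltW | rewrite subr_ge0].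
      apply: ler_wpM2l; first exact: ltW.
      have cj : cond (g w).
        apply/andP; split; first exact: negbT hne.
        apply: asboolT; rewrite /a -hr; exact: reach_snoc rw al0.
      have qpos : 0 < q (g w) by rewrite /q subr_gt0; exact: hN.
      have := ple _ qpos; rewrite /q /a; lra.
    apply: (@le_trans _ _ (\sum_(y | y != (ap (g w)).2) alpha T M (g w) y w)); last by lra.
    apply: ler_sum => y _.
    rewrite -[leRHS]mulr1; apply: ler_wpM2l.
      exact: (alpha_ge0 sT sM _ _ (proj1 hw)).
    case: eqP => // _; apply: (avoid_le1 g sT sM); exact: (rupd_subp sT sM _ _ (proj1 hw)).
  have := @ler_wpM2r _ p (ltW pp) _ _ alp; rewrite /rho; nra.
have sL : forall K, avoid T M g z (K + N.+1) z <= avoid T M g z K z * rho.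
  move=> K; apply: (submult sT sM (S := reach T M g z)) => //.
  - by move=> w y rw ha; exact: reach_snoc rw ha.
  - exact: reach0.
  - exact: (proj1 probz).
have rho1 : rho < 1.
  by rewrite /rho; have := mulr_gt0 (mulr_gt0 c0p cMp) pp; lra.
have fin := series_geom (s := fun k => avoid T M g z k z) (L := N.+1)
  (fun k => avoid_ge0 g sT sM z k (proj1 probz))
  (fun k => avoid_le1 g sT sM z k (prob_subp probz)) rho1 sL.
exists i, (ap i).1, (ap i).2; split; first exact: hap i.
split; first by exists (ap i).1; exact: orbit_base.
exact: fin.
Qed.

End Main.

Unset Implicit Arguments.
Set Strict Implicit.

Theorem proposition2p22 (R : realType) (n m : nat) (O : finType)
  (T : 'M[R]_n) (M : O -> 'M[R]_(n, m)) (g : 'rV[R]_n -> O) :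
  stochastic T -> (forall i, stochastic (M i)) ->
  positive_hmm T -> anchored_hmm T M ->
  exists (i : O) (x : 'I_n) (y : 'I_m),
    anchor_pair M i x y /\ inR T M (delta R x) /\
    positive_recurrent T M g (delta R x).
Proof.
move=> sT sM posT [_ anc].
exact: (main_aux g sT sM posT anc).
Qed.
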